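(* Let $f_1=(a_1,\lambda_1),\dots,f_p=(a_p,\lambda_p)\in\mathcal{H}(n,\mathbb{C})\setminus\mathcal{SR}_n$ and let $G$ be the subgroup of $\mathcal{H}(n,\mathbb{C})$ generated by $f_1,\dots,f_p$. Then $E_G$ is the complex affine subspace of $\mathbb{C}^n$ generated by $\{a_1,\dots,a_p\}$.
   Context: $\mathcal{H}(n,\mathbb{C})$ is the group of maps $z\mapsto\lambda z+b$ of $\mathbb{C}^n$ with $\lambda\in\mathbb{C}^*$, $b\in\mathbb{C}^n$; $\mathcal{T}_n$ = translations. For $a\in\mathbb{C}^n$, $\lambda\in\mathbb{C}\setminus\{0,1\}$, $(a,\lambda)$ denotes $z\mapsto\lambda(z-a)+a$, with unique fixed point (center) $a$. $H_2=(\frac{\pi}{2}+\pi\mathbb{Z})\cup\pi\mathbb{Z}$, $F_2=\{e^{ix}:x\in H_2\}$, $H_3=(\frac{\pi}{3}+\pi\mathbb{Z})\cup(-\frac{\pi}{3}+\pi\mathbb{Z})\cup\pi\mathbb{Z}$, $F_3=\{e^{ix}:x\in H_3\}$; $\mathcal{S}_i\mathcal{R}_n=\{z\mapsto\lambda z+b:\lambda\in F_i, b\in\mathbb{C}^n\}$, $\mathcal{SR}_n=\mathcal{S}_2\mathcal{R}_n\cup\mathcal{S}_3\mathcal{R}_n$. For a subgroup $G$, $\Gamma_G$ is the set of centers of elements of $G\setminus\mathcal{T}_n$ and $E_G$ is the smallest complex affine subspace of $\mathbb{C}^n$ containing $\Gamma_G$. *)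

(* Defs.v *)
From Stdlib Require Import Reals ZArith.
From Stdlib Require Fin.
Open Scope R_scope.

Definition CC : Type := (R * R)%type.
Definition Czero : CC := (0, 0).
Definition Cone : CC := (1, 0).
Definition Cadd (z w : CC) : CC := (fst z + fst w, snd z + snd w).
Definition Copp (z : CC) : CC := (- fst z, - snd z).
Definition Csub (z w : CC) : CC := Cadd z (Copp w).
Definition Cmul (z w : CC) : CC :=
  (fst z * fst w - snd z * snd w, fst z * snd w + snd z * fst w).
Definition Cinv (z : CC) : CC :=
  (fst z / (fst z ^ 2 + snd z ^ 2), - snd z / (fst z ^ 2 + snd z ^ 2)).
Definition cexpi (x : R) : CC := (cos x, sin x).

Definition vec (n : nat) : Type := Fin.t n -> CC.
Definition vzero {n} : vec n := fun _ => Czero.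
Definition vadd {n} (x y : vec n) : vec n := fun i => Cadd (x i) (y i).
Definition vsub {n} (x y : vec n) : vec n := fun i => Csub (x i) (y i).
Definition vscale {n} (c : CC) (x : vec n) : vec n := fun i => Cmul c (x i).

Definition H2 (x : R) : Prop :=
  exists k : Z, x = PI / 2 + IZR k * PI \/ x = IZR k * PI.
Definition F2 (l : CC) : Prop := exists x, H2 x /\ l = cexpi x.
Definition H3 (x : R) : Prop :=
  exists k : Z, x = PI / 3 + IZR k * PI \/ x = - (PI / 3) + IZR k * PI
                \/ x = IZR k * PI.
Definition F3 (l : CC) : Prop := exists x, H3 x /\ l = cexpi x.

(* An element z |-> l z + b of H(n,CC) (l <> 0) is represented by (l, b).
   It lies in SR_n iff l \in F_2 \/ l \in F_3. *)
Definition in_SR (l : CC) : Prop := F2 l \/ F3 l.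

(* The element (a, l) : z |-> l (z - a) + a, i.e. the pair (l, (1 - l) a). *)
Definition hom_b {n} (a : vec n) (l : CC) : vec n := vscale (Csub Cone l) a.

(* composition: (l1,b1) o (l2,b2) = (l1 l2, l1 b2 + b1);
   inverse:     (l,b)^{-1} = (l^{-1}, - l^{-1} b). *)
Inductive InGen (n p : nat) (a : nat -> vec n) (lam : nat -> CC)
  : CC -> vec n -> Prop :=
| InGen_id : InGen n p a lam Cone vzero
| InGen_gen : forall k, (k < p)%nat -> InGen n p a lam (lam k) (hom_b (a k) (lam k))
| InGen_comp : forall l1 b1 l2 b2,
    InGen n p a lam l1 b1 -> InGen n p a lam l2 b2 ->
    InGen n p a lam (Cmul l1 l2) (vadd (vscale l1 b2) b1)
| InGen_inv : forall l b,
    InGen n p a lam l b -> InGen n p a lam (Cinv l) (vscale (Copp (Cinv l)) b).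

Definition Gamma (n p : nat) (a : nat -> vec n) (lam : nat -> CC) (x : vec n) : Prop :=
  exists l b, InGen n p a lam l b /\ l <> Cone /\ vadd (vscale l x) b = x.

Definition is_linsub {n} (V : vec n -> Prop) : Prop :=
  V vzero /\ (forall x y, V x -> V y -> V (vadd x y))
  /\ (forall c x, V x -> V (vscale c x)).
Definition is_affine {n} (S : vec n -> Prop) : Prop :=
  (forall x, ~ S x) \/
  exists (q : vec n) (V : vec n -> Prop), is_linsub V /\ forall x, S x <-> V (vsub x q).
Definition aff_hull {n} (A : vec n -> Prop) (x : vec n) : Prop :=
  forall S, is_affine S -> (forall y, A y -> S y) -> S x.

(* Main.v *)
Require Import Defs.
From Stdlib Require Import Reals ZArith Lra FunctionalExtensionality.
Open Scope R_scope.

Ltac cdes := repeat match goal with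
  | [ |- context [ ?z ] ] => match type of z with CC =>
       lazymatch z with (_,_) => fail | _ => is_var z; destruct z end end end.

Lemma pair_eq (a b c d : R) : a = c -> b = d -> (a, b) = (c, d).
Proof. intros; subst; auto. Qed.

Definition nrm (z : CC) := fst z ^ 2 + snd z ^ 2.

Lemma nrm_nz z : z <> Czero -> nrm z <> 0.
Proof.
  destruct z as [u v]; unfold nrm, Czero; simpl; intros H E; apply H.
  assert (u = 0) by nra. assert (v = 0) by nra. subst; auto.
Qed.

Lemma key n p (a : nat -> vec n) lam (q : vec n) (V : vec n -> Prop)
  (HV : is_linsub V) (Ha : forall k, (k < p)%nat -> V (vsub (a k) q))
  (Hlam0 : forall k, (k < p)%nat -> lam k <> Czero) :
  forall l b, InGen n p a lam l b ->
    nrm l <> 0 /\ V (vsub b (vscale (Csub Cone l) q)).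
Proof.
  destruct HV as [V0 [VA VS]].
  induction 1.
  - split. unfold nrm, Cone; simpl; lra.
    replace (vsub vzero (vscale (Csub Cone Cone) q)) with (@vzero n); auto.
    apply functional_extensionality; intro i.
    unfold vzero, vsub, vscale, Csub, Cadd, Copp, Cmul, Cone, Czero; simpl.
    destruct (q i); simpl; apply pair_eq; ring.
  - split. apply nrm_nz; auto.
    replace (vsub (hom_b (a k) (lam k)) (vscale (Csub Cone (lam k)) q))
      with (vscale (Csub Cone (lam k)) (vsub (a k) q)); auto.
    apply functional_extensionality; intro i.
    unfold hom_b, vzero, vsub, vscale, Csub, Cadd, Copp, Cmul, Cone, Czero; simpl.
    destruct (q i), (a k i), (lam k); simpl; apply pair_eq; ring.
  - destruct IHInGen1 as [N1 V1], IHInGen2 as [N2 V2]. split.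
    + replace (nrm (Cmul l1 l2)) with (nrm l1 * nrm l2).
      now apply Rmult_integral_contrapositive.
      destruct l1, l2; unfold nrm, Cmul; simpl; ring.
    + replace (vsub (vadd (vscale l1 b2) b1) (vscale (Csub Cone (Cmul l1 l2)) q))
      with (vadd (vscale l1 (vsub b2 (vscale (Csub Cone l2) q)))
                 (vsub b1 (vscale (Csub Cone l1) q))); auto.
      apply functional_extensionality; intro i.
      unfold hom_b, vadd, vzero, vsub, vscale, Csub, Cadd, Copp, Cmul, Cone, Czero; simpl.
      destruct (q i), (b1 i), (b2 i), l1, l2; simpl; apply pair_eq; ring.
  - destruct IHInGen as [N1 V1]. split.
    + destruct l as [u v]; unfold nrm, Cinv in *; cbn [fst snd] in *.
      replace ((u / (u ^ 2 + v ^ 2)) ^ 2 + (- v / (u ^ 2 + v ^ 2)) ^ 2)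
        with (/ (u^2+v^2)) by (field; auto).
      now apply Rinv_neq_0_compat.
    + replace (vsub (vscale (Copp (Cinv l)) b) (vscale (Csub Cone (Cinv l)) q))
        with (vscale (Copp (Cinv l)) (vsub b (vscale (Csub Cone l) q))); auto.
      apply functional_extensionality; intro i.
      unfold hom_b, vadd, vzero, vsub, vscale, Csub, Cadd, Copp, Cmul, Cinv, Cone, Czero.
      destruct (q i), (b i), l as [u v]; unfold nrm in N1; simpl in *; apply pair_eq; field; intro E; apply N1; lra.
Qed.

Lemma triv n p (a : nat -> vec n) lam (Hp : forall k, ~ (k < p)%nat) :
  forall l b, InGen n p a lam l b -> l = Cone.
Proof.
  induction 1.
  - auto.
  - exfalso; eapply Hp; eauto.
  - subst; unfold Cmul, Cone; cbn [fst snd]; apply pair_eq; ring.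
  - subst; unfold Cinv, Cone; cbn [fst snd]; apply pair_eq; field.
Qed.

Theorem lemma2p7 (n p : nat) (a : nat -> vec n) (lam : nat -> CC)
  (Hlam0 : forall k, (k < p)%nat -> lam k <> Czero)
  (Hlam1 : forall k, (k < p)%nat -> lam k <> Cone)
  (HSR : forall k, (k < p)%nat -> ~ in_SR (lam k)) :
  forall x : vec n,
    aff_hull (Gamma n p a lam) x <->
    aff_hull (fun y => exists k, (k < p)%nat /\ y = a k) x.
Proof.
  intro x; split.
  - intros H S HS Hsub. apply H; auto.
    intros y [l [b [Hg [Hl1 Hfix]]]].
    destruct HS as [Emp | [q [V [HV Hiff]]]].
    + exfalso. apply Hl1. eapply triv; [|exact Hg].
      intros k Hk. apply (Emp (a k)). apply Hsub. eauto.
    + apply Hiff.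
      destruct (key n p a lam q V HV) with (l := l) (b := b) as [_ Vb]; auto.
      { intros k Hk. apply Hiff. apply Hsub. eauto. }
      assert (Hb : b = vsub y (vscale l y)).
      { apply functional_extensionality; intro i.
        pose proof (equal_f Hfix i) as Hi.
        unfold vsub, vadd, vscale, Csub, Cadd, Copp, Cmul in *.
        destruct (b i), (y i), l; cbn [fst snd] in *.
        injection Hi; intros; apply pair_eq; lra. }
      assert (Nz : nrm (Csub Cone l) <> 0).
      { apply nrm_nz. intro E; apply Hl1. destruct l as [u v].
        unfold Csub, Cadd, Copp, Cone, Czero in E; cbn [fst snd] in E.
        injection E; intros; apply pair_eq; lra. }
      replace (vsub y q) with
        (vscale (Cinv (Csub Cone l)) (vsub b (vscale (Csub Cone l) q))).
      { destruct HV as [_ [_ VS]]; auto. }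
      subst b. apply functional_extensionality; intro i.
      destruct l as [u v]; unfold nrm in Nz.
      unfold vsub, vadd, vscale, Csub, Cadd, Copp, Cmul, Cinv, Cone in *;
        cbn [fst snd] in *.
      destruct (y i), (q i); cbn [fst snd]; apply pair_eq; field; intro E; apply Nz; lra.
  - intros H S HS Hsub. apply H; auto.
    intros y [k [Hk ->]]. apply Hsub.
    exists (lam k), (hom_b (a k) (lam k)). split; [constructor; auto|split; auto].
    apply functional_extensionality; intro i.
    unfold hom_b, vsub, vadd, vscale, Csub, Cadd, Copp, Cmul, Cone.
    destruct (a k i), (lam k); cbn [fst snd]; apply pair_eq; ring.
Qed.
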